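(* Let $q>0$, $q\neq1$, and let $f(x)=\sum_{N=0}^\infty a_Nx^N$ be a formal power series. Then $$e^{-\frac{1}{[2]_q^2}D_x^2}f(x)=\sum_{N=0}^\infty a_N\frac{H_N(x;q)}{[2]_q^N},$$ where the left-hand side is understood termwise, i.e. as $\sum_N a_N\,e^{-\frac{1}{[2]_q^2}D_x^2}x^N$.
   Context: For $n\ge 0$ let $[n]_q=\frac{q^n-1}{q-1}$, $[0]_q!=1$, $[n]_q!=[1]_q\cdots[n]_q$, and $e_q(z)=\sum_{n\ge0}z^n/[n]_q!$. The $q$-derivative acts by $D_x x^n=[n]_qx^{n-1}$, and $e^{aD_x^2}:=\sum_{n\ge0}\frac{a^n}{n!}D_x^{2n}$. The $q$-Hermite polynomials $H_N(x;q)$ are defined by the identity of formal power series in $t$: $e^{-t^2}e_q([2]_q t x)=\sum_{N\ge0}H_N(x;q)\,t^N/[N]_q!$. *)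

(* Defs.v *)
From mathcomp Require Import all_boot all_order all_algebra.
Set Implicit Arguments. Unset Strict Implicit. Unset Printing Implicit Defensive.
Import Order.TTheory GRing.Theory Num.Theory.
Local Open Scope ring_scope.

Section QDefs.
Variables (R : realFieldType) (q : R).

Definition qint (n : nat) : R := (q ^+ n - 1) / (q - 1).

Definition qfact (n : nat) : R := \prod_(1 <= i < n.+1) qint i.

(* q-derivative on polynomials: D_x x^n = [n]_q x^(n-1), extended linearly *)
Definition qderiv (p : {poly R}) : {poly R} :=
  \poly_(i < (size p).-1) (qint i.+1 * p`_i.+1).

(* e^{a D_x^2} p = sum_{n>=0} a^n/n! D_x^{2n} p.  For a polynomial p the terms
   with 2n >= size p vanish, so the sum is truncated at n < size p. *)
Definition qexpD2 (a : R) (p : {poly R}) : {poly R} :=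
  \sum_(n < size p) ((a ^+ n) / (n`!)%:R) *: iter (2 * n) qderiv p.

(* Coefficient of t^j in e^{-t^2}. *)
Definition expmsq_coef (j : nat) : R :=
  if odd j then 0 else (-1) ^+ j./2 / (j./2)`!%:R.

(* Coefficient of t^k in e_q([2]_q t x): ([2]_q x)^k / [k]_q!. *)
Definition eq_coef (k : nat) : {poly R} :=
  (qint 2 ^+ k / qfact k) *: 'X^k.

(* H_N(x;q) determined by e^{-t^2} e_q([2]_q t x) = sum_N H_N t^N/[N]_q!,
   i.e. H_N/[N]_q! is the t^N coefficient of the Cauchy product. *)
Definition qHermite (N : nat) : {poly R} :=
  qfact N *: \sum_(k < N.+1) expmsq_coef (N - k) *: eq_coef k.

End QDefs.

(* Main.v *)
Require Import Defs.
From mathcomp Require Import all_boot all_order all_algebra.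
Import Order.TTheory GRing.Theory Num.Theory.
Local Open Scope ring_scope.

Section Aux.
Variables (R : realFieldType) (q : R).

Lemma qint0 : qint q 0 = 0.
Proof. by rewrite /qint expr0 subrr mul0r. Qed.

Lemma qderiv0 : qderiv q 0 = 0.
Proof. by by rewrite /qderiv size_poly0 poly_def big_ord0. Qed.

Lemma qderiv_scaleXn (c : R) (N : nat) :
  qderiv q (c *: 'X^N) = (c * qint q N) *: 'X^(N.-1).
Proof.
have [->|c0] := eqVneq c 0; first by rewrite mul0r !scale0r qderiv0.
apply/polyP => i; rewrite coef_poly. rewrite coefZ. rewrite coefXn. rewrite size_scale //. rewrite size_polyXn /=.
rewrite coefZ coefXn.
case: N => [|M] /=; first by rewrite qint0 mulr0 mul0r.
case: ltnP => H.
  rewrite eqSS; case: eqP => [->|]; rewrite ?mulr0 // !mulr1 mulrC //.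

by rewrite (gtn_eqF H) mulr0.
Qed.

Lemma iter_qderiv (m N : nat) :
  iter m (qderiv q) 'X^N = (\prod_(i < m) qint q (N - i)) *: 'X^(N - m).
Proof.
elim: m => [|m IH]; first by rewrite big_ord0 scale1r subn0.
by rewrite iterS IH qderiv_scaleXn big_ord_recr /= subnS.
Qed.

Lemma qfactS n : qfact q n.+1 = qfact q n * qint q n.+1.
Proof. by rewrite /qfact big_nat_recr. Qed.

Lemma qfact_split (m N : nat) : (m <= N)%N ->
  qfact q N = (\prod_(i < m) qint q (N - i)) * qfact q (N - m).
Proof.
elim: m => [|m IH] H; first by rewrite big_ord0 mul1r subn0.
rewrite IH ?(ltnW H) // big_ord_recr /= -mulrA; congr (_ * _).
have E : (N - m = (N - m.+1).+1)%N by rewrite subnS prednK // subn_gt0.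
by rewrite E qfactS mulrC subnSK.
Qed.

Hypothesis hq0 : 0 < q.
Hypothesis hq1 : q != 1.

Lemma qint_neq0 i : (0 < i)%N -> qint q i != 0.
Proof.
move=> Hi; rewrite /qint mulf_neq0 // ?invr_eq0 subr_eq0 //.
by rewrite pexpr_eq1 // ltW.
Qed.

Lemma qfact_neq0 n : qfact q n != 0.
Proof.
elim: n => [|n IH]; first by rewrite /qfact big_geq // oner_neq0.
by rewrite qfactS mulf_neq0 // qint_neq0.
Qed.

End Aux.

Lemma sum_even (V : zmodType) (f : nat -> V) (M : nat) :
  \sum_(0 <= j < (2 * M)%N) (if odd j then 0 else f j./2) = \sum_(0 <= n < M) f n.
Proof.
elim: M => [|M IH]; first by rewrite !big_geq.
rewrite mulnS !addSn add0n !big_nat_recr //= IH.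
rewrite mul2n odd_double addr0 /= doubleK; by [].
Qed.

From mathcomp Require Import ring.

Theorem mainTheorem10 (R : realFieldType) (q : R) (hq0 : 0 < q) (hq1 : q != 1)
    (a : nat -> R) :
  forall N : nat,
    a N *: qexpD2 q (- (qint q 2 ^+ 2)^-1) 'X^N
    = a N *: ((qint q 2 ^+ N)^-1 *: qHermite q N).
Proof.
move=> N; congr (_ *: _).
set t := qint q 2.
have t0 : t != 0 by apply: qint_neq0.
set a' := - (t ^+ 2)^-1.
pose F n := (a' ^+ n / (n`!)%:R) *: ((\prod_(i < 2 * n) qint q (N - i)) *: 'X^(N - 2 * n)).
have F0 n : (N < 2 * n)%N -> F n = 0.
  move=> H; rewrite /F (bigD1 (Ordinal H)) //= subnn qint0 mul0r.
  by rewrite scale0r scaler0.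
have -> : qexpD2 q a' 'X^N = \sum_(0 <= n < N.+1) F n.
  rewrite /qexpD2 size_polyXn big_mkord; apply: eq_bigr => n _.
  by rewrite iter_qderiv.
rewrite -sum_even (big_cat_nat _ (n:=N.+1)) //=; last first.
  by rewrite mul2n -addnn leq_addl.
rewrite [X in _ + X]big_nat_cond [X in _ + X]big1 ?addr0; last first.
  move=> j /andP[/andP[Hj1 _] _]; case: ifP => // Hodd.
  apply: F0; rewrite mul2n; rewrite -[j](odd_double_half j) Hodd add0n in Hj1.
  exact: Hj1.
rewrite /qHermite [LHS]big_mkord [LHS](reindex_inj rev_ord_inj) /= !scaler_sumr.
suff key : forall j, (j <= N)%N -> (if odd j then 0 else F j./2) =
   t ^- N *: (qfact q N *: (expmsq_coef R j *: eq_coef q (N - j))).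
  apply: eq_bigr => i _; rewrite subSS.
  have Hi : (i <= N)%N by rewrite -ltnS.
  by rewrite key ?leq_subr // subKn.
move=> j Hj; rewrite /expmsq_coef /eq_coef.
move: (j./2) (odd_double_half j) => n; case: (odd j) => /= Hn.
  by rewrite !scale0r !scaler0.
rewrite add0n in Hn; subst j.
rewrite -mul2n in Hj *; rewrite /F -/t !scalerA; congr (_ *: _).
rewrite (@qfact_split R q _ _ Hj).
have tN : t ^+ N = t ^+ (N - 2 * n) * t ^+ (2 * n) by rewrite -exprD subnK.
rewrite tN /a' (exprNn (t ^- 2)) exprVn -exprM.
have f0 : qfact q (N - 2 * n) != 0 by apply: qfact_neq0.
have n0 : (n`!)%:R != 0 :> R by rewrite pnatr_eq0 -lt0n fact_gt0.
have t1 : t ^+ (N - 2 * n) != 0 by rewrite expf_neq0.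
have t2 : t ^+ (2 * n) != 0 by rewrite expf_neq0.
move: f0 n0 t1 t2; move: (qfact q _) (n`!%:R) (t ^+ (N - 2 * n)) (t ^+ (2 * n)) ((-1) ^+ n) (\prod_(i < 2 * n) qint q (N - i)) => A B C D E P f0 n0 t1 t2. field.
by rewrite f0 n0 t1 t2.
Qed.
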